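(* Let $q$ be a prime power and let $C$ be an $[n,k,d]_q$ Griesmer optimal linear code with $q\mid d$ and $\Gamma_q(n,k,d)\ge 2$. Let $\mathbf{c}\in C$ be any codeword of weight $d$ and let $C'$ be any linear subcode of $C$ with $C=\langle \mathbf{c},C'\rangle$ and $\mathbf{c}\notin C'$ (a supplementary subcode of $\mathbf{c}$). Then $$A_{d/q}\big(\Upsilon_{\mathbf{c}}(C)\big)\le \min\Big\{A_d(C'),\ \min\{A_d(C'+\alpha\mathbf{c}) : \alpha\in\mathbb{F}_q^*\}\Big\}.$$
   Context: An $[n,k,d]_q$ linear code is a $k$-dimensional subspace of $\mathbb{F}_q^n$ with minimum nonzero Hamming weight $d$. For any set $S\subseteq\mathbb{F}_q^n$, $A_i(S)$ is the number of vectors of Hamming weight $i$ in $S$; $C'+\mathbf{v}=\{\mathbf{c}'+\mathbf{v}:\mathbf{c}'\in C'\}$. The support of a vector is the set of its nonzero coordinates; $\Upsilon_{\mathbf{c}}(C)$ (the residual code of $C$ with respect to $\mathbf{c}$) is the code obtained from $C$ by deleting all coordinates in the support of $\mathbf{c}$. Let $g_q(k,d)=\sum_{i=0}^{k-1}\lceil d/q^i\rceil$. $C$ is Griesmer optimal if $n<g_q(k,d+1)$. For a Griesmer optimal $[n,k,d]_q$ code, $\Gamma_q(n,k,d)=k$ if $n=g_q(k,d)$; otherwise $\Gamma_q(n,k,d)$ is the smallest non-negative integer $k_1$ such that $n-g_q(k_1,d)\ge g_q(k-k_1,\lceil d/q^{k_1}\rceil+1)$ (with $g_q(0,\cdot)=0$).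 *)

(* Defs.v *)
From HB Require Import structures.
From mathcomp Require Import all_boot all_order all_algebra all_field.
Set Implicit Arguments. Unset Strict Implicit. Unset Printing Implicit Defensive.
Import GRing.Theory.
Local Open Scope ring_scope.

Definition wt (F : finFieldType) (n : nat) (x : 'rV[F]_n) : nat :=
  #|[set i : 'I_n | x 0 i != 0]|.

Definition A (F : finFieldType) (n : nat) (i : nat) (S : {set 'rV[F]_n}) : nat :=
  #|[set x in S | wt x == i]|.

Definition codeset (F : finFieldType) (n : nat) (C : {vspace 'rV[F]_n}) : {set 'rV[F]_n} :=
  [set x : 'rV[F]_n | x \in C].

Definition coset (F : finFieldType) (n : nat) (C : {vspace 'rV[F]_n}) (v : 'rV[F]_n)
  : {set 'rV[F]_n} := [set x + v | x in codeset C].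

Definition min_dist (F : finFieldType) (n : nat) (C : {vspace 'rV[F]_n}) (d : nat) : Prop :=
  (exists2 x : 'rV[F]_n, (x \in C) && (x != 0) & wt x = d) /\
  (forall x : 'rV[F]_n, x \in C -> x != 0 -> (d <= wt x)%N).

Definition offsupp (F : finFieldType) (n : nat) (c : 'rV[F]_n) : {set 'I_n} :=
  [set i : 'I_n | c 0 i == 0].

(* Delete the coordinates of the support of c from x (remaining coordinates
   kept in increasing order); result has length n - wt c. *)
Definition delete_supp (F : finFieldType) (n : nat) (c x : 'rV[F]_n)
  : 'rV[F]_#|offsupp c| :=
  \row_(j < #|offsupp c|) x 0 (enum_val j).

Definition residual (F : finFieldType) (n : nat) (c : 'rV[F]_n) (C : {vspace 'rV[F]_n})
  : {set 'rV[F]_#|offsupp c|} := [set delete_supp c x | x in codeset C].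

Definition ceildiv (a b : nat) : nat := ((a + b.-1) %/ b)%N.

Definition griesmer (q k d : nat) : nat := (\sum_(i < k) ceildiv d (q ^ i))%N.

(* Gamma_q(n,k,d). Smallest k1 (searched in 0..k, and k1 = k always qualifies
   when n >= g_q(k,d)). *)
Definition Gamma (q n k d : nat) : nat :=
  if n == griesmer q k d then k
  else find (fun k1 => griesmer q (k - k1) (ceildiv d (q ^ k1) + 1)
                        <= n - griesmer q k1 d)%N (iota 0 k.+1).

(* Main.v *)
Require Import Defs.
From HB Require Import structures.
From mathcomp Require Import all_boot all_order all_algebra all_field.
From mathcomp Require Import zify.
Import GRing.Theory.
Set Implicit Arguments. Unset Strict Implicit.
Local Open Scope ring_scope.

Lemma wt_split (F : finFieldType) n (x c : 'rV[F]_n) (a : F) :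
  wt (x + a *: c) = addn #|[set i : 'I_n | (c 0 i == 0) && (x 0 i != 0)]|
     #|[set i : 'I_n | (c 0 i != 0) && (x 0 i + a * c 0 i != 0)]|.
Proof.
rewrite /wt -(cardsID [set i : 'I_n | c 0 i == 0]).
congr (_ + _)%N; apply/eq_card => i; rewrite !inE !mxE.
  by case: (c 0 i =P 0) => [->|] /=; rewrite ?mulr0 ?addr0 ?andbT ?andbF.
by [].
Qed.

Lemma wt_split2 (F : finFieldType) n (x c : 'rV[F]_n) (a : F) :
  addn #|[set i : 'I_n | (c 0 i != 0) && (x 0 i + a * c 0 i != 0)]|
   #|[set i : 'I_n | (c 0 i != 0) && (x 0 i + a * c 0 i == 0)]| = wt c.
Proof.
rewrite /wt -(cardsID [set i : 'I_n | x 0 i + a * c 0 i != 0] [set i : 'I_n | c 0 i != 0]).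
by f_equal; apply/eq_card => i; rewrite !inE // negbK andbC.
Qed.

Lemma sum_part (F : finFieldType) n (x c : 'rV[F]_n) :
  \big[addn/0%N]_(a : F) #|[set i : 'I_n | (c 0 i != 0) && (x 0 i + a * c 0 i == 0)]| = wt c.
Proof.
rewrite /wt.
under eq_bigr => a _ do rewrite -sum1_card big_mkcond /=.
rewrite exchange_big /= -sum1_card [RHS]big_mkcond /=.
apply: eq_bigr => i _; rewrite inE.
case: (boolP (c 0 i != 0)) => ci /=; last first.
  by rewrite big1 // => a _; rewrite inE (negPf ci).
rewrite (bigD1 (- x 0 i / c 0 i)) //= big1 ?inE ?ci /=.
  by rewrite divfK // addrN eqxx addn0.
move=> a na; rewrite inE ci /= addr_eq0 ifF //; apply/negP => /eqP h.
by move: na; rewrite h opprK mulfK // eqxx.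
Qed.

Lemma wt_delete (F : finFieldType) n (x c : 'rV[F]_n) :
  wt (delete_supp c x) = #|[set i : 'I_n | (c 0 i == 0) && (x 0 i != 0)]|.
Proof.
rewrite /wt.
have -> : [set i : 'I_n | (c 0 i == 0) && (x 0 i != 0)] =
  [set enum_val j | j in [set j : 'I_#|offsupp c| | x 0 (enum_val j) != 0]].
  apply/setP => i; rewrite inE; apply/andP/imsetP.
    case=> ci xi.
    have Hi : i \in offsupp c by rewrite inE.
    exists (enum_rank_in Hi i); last by rewrite enum_rankK_in.
    by rewrite inE enum_rankK_in.
  case=> j; rewrite inE => xj ->; split => //.
  by have := enum_valP j; rewrite inE.
rewrite card_imset; last exact: enum_val_inj.
by apply/eq_card => j; rewrite !inE mxE.
Qed.

Lemma wt0 (F : finFieldType) n : wt (0 : 'rV[F]_n) = 0%N.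
Proof. by apply/eqP; rewrite cards_eq0; apply/eqP/setP => i; rewrite !inE mxE eqxx. Qed.

Lemma key (F : finFieldType) n (x c : 'rV[F]_n) (d : nat) (a : F) :
  (forall b : F, x + b *: c != 0 -> (d <= wt (x + b *: c))%N) ->
  wt c = d -> (#|F| %| d)%N -> wt (delete_supp c x) = (d %/ #|F|)%N -> (0 < d)%N ->
  wt (x + a *: c) = d.
Proof.
move=> Hmin wc dvd wy d0.
rewrite wt_delete in wy.
set m := (d %/ #|F|)%N in wy *.
have q1 : (0 < #|F|)%N by apply/card_gt0P; exists 0.
have dm : d = (#|F| * m)%N by rewrite /m mulnC divnK.
have m0 : (0 < m)%N by move: d0; rewrite dm muln_gt0 => /andP[].
clearbody m.
have NP b := wt_split2 x c b.
have Nle : forall b : F, leq #|[set i : 'I_n | (c 0 i != 0) && (x 0 i + b * c 0 i == 0)]| m.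
  move=> b; have := Hmin b; rewrite wt_split wy.
  have := NP b; rewrite wc.
  have nz : x + b *: c != 0.
    apply/eqP => h; have := wt_split x c b; rewrite h wt0 wy; lia.
  move=> h1 /(_ nz) h2; lia.
have S := sum_part x c; rewrite wc (bigD1 a) //= in S.
have Sle : leq (\big[addn/0%N]_(b | b != a)
   #|[set i : 'I_n | (c 0 i != 0) && (x 0 i + b * c 0 i == 0)]|) (muln #|predC1 a| m).
  rewrite -sum_nat_const; apply: leq_sum => b _; exact: Nle.
rewrite cardC1 in Sle.
have := NP a; have := Nle a; rewrite wc wt_split wy.
move: S Sle. 
set N := #|[set i : 'I_n | (c 0 i != 0) && (x 0 i + a * c 0 i == 0)]|.
set P := #|[set i : 'I_n | (c 0 i != 0) && (x 0 i + a * c 0 i != 0)]|.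
set R := bigop _ _ _.
move: N P R => N P R.
rewrite dm; case: #|F| q1 => // q _ /= h1 h2 h3 h4.
move: h1 h2 h3 h4; rewrite !mulSn; move: (q * m)%N => Q.
clear; lia.
Qed.

Lemma delete_addc (F : finFieldType) n (x c : 'rV[F]_n) (b : F) :
  delete_supp c (x + b *: c) = delete_supp c x.
Proof.
apply/rowP => j; rewrite !mxE.
by have := enum_valP j; rewrite inE => /eqP ->; rewrite mulr0 addr0.
Qed.

Lemma main_ineq (F : finFieldType) (n d : nat)
  (C C' : {vspace 'rV[F]_n}) (c : 'rV[F]_n) (alpha : F) :
  min_dist C d -> (#|F| %| d)%N ->
  c \in C -> wt c = d ->
  (C' <= C)%VS -> C = (<[c]> + C')%VS ->
  (A (d %/ #|F|) (residual c C) <= A d (coset C' (alpha *: c)))%N.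
Proof.
move=> [[z0 /andP[z0C z0n] wz0] Hmin] dvd cC wc sC' defC.
have d0 : (0 < d)%N.
  rewrite -wz0 /wt card_gt0; apply/set0Pn.
  case: (pickP (fun i => z0 0 i != 0)) => [i hi|h]; first by exists i; rewrite inE.
  by case/eqP: z0n; apply/rowP => j; rewrite mxE; have := h j => /negbFE/eqP.
set m := (d %/ #|F|)%N.
set g := fun y : 'rV[F]_#|offsupp c| =>
  odflt 0 [pick x in codeset C' | delete_supp c x == y] + alpha *: c.
have gS : forall y, y \in residual c C ->
   exists2 x, x \in C' & (delete_supp c x = y /\ g y = x + alpha *: c).
  move=> _ /imsetP [z zC ->].
  move: zC; rewrite inE; rewrite defC => /memv_addP [u /vlineP [b eu] [x xC' ez]].
  rewrite ez eu.
  rewrite /g; case: pickP => [x' /andP [x'C /eqP ex']|].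
    by exists x'; first by move: x'C; rewrite inE.
  by move=> h; have := h x; rewrite inE xC' addrC delete_addc eqxx.
rewrite /A -(@card_in_imset _ _ g).
  apply: subset_leq_card; apply/subsetP => w /imsetP [y].
  rewrite inE => /andP [yR /eqP wy] ew; subst w.
  have [x xC' [ex ->]] := gS y yR.
  rewrite inE; apply/andP; split.
    by apply/imsetP; exists x => //; rewrite inE.
  apply/eqP; apply: (key (d := d)) => //; last by rewrite ex.
  move=> b nz; apply: Hmin => //.
  by apply: memvD; [apply: (subvP sC') | apply: memvZ].
move=> y1 y2; rewrite !inE => /andP [y1R _] /andP [y2R _].
have [x1 _ [e1 ->]] := gS y1 y1R; have [x2 _ [e2 ->]] := gS y2 y2R.
by move/addIr => h; rewrite -e1 -e2 h.
Qed.

Theorem proposition1 (F : finFieldType) (n k d : nat)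
  (C C' : {vspace 'rV[F]_n}) (c : 'rV[F]_n) :
  \dim C = k ->
  min_dist C d ->
  (n < griesmer #|F| k d.+1)%N ->
  (#|F| %| d)%N ->
  (2 <= Gamma #|F| n k d)%N ->
  c \in C -> wt c = d ->
  (C' <= C)%VS -> c \notin C' -> C = (<[c]> + C')%VS ->
  (A (d %/ #|F|) (residual c C) <= A d (codeset C'))%N /\
  (forall alpha : F, alpha != 0 ->
     (A (d %/ #|F|) (residual c C) <= A d (coset C' (alpha *: c)))%N).
Proof.
move=> _ md _ dvd _ cC wc sC' _ defC; split; last first.
  by move=> alpha _; exact: main_ineq.
have := main_ineq 0 md dvd cC wc sC' defC.
suff -> : coset C' (0 *: c) = codeset C' by [].
rewrite /coset scale0r; apply/setP => x; apply/imsetP/idP.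
  by case=> y yC ->; rewrite addr0.
by move=> xC; exists x => //; rewrite addr0.
Qed.
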